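(* Let $B$ be a BDD and let $B^r$ be the reduced BDD for the same variable ordering with $X_{B^r}=X_B$ (so $|N^r_i|\le|N_i|$ for each layer $i$). Then the projection of $\mathcal{F}^{cap}(B^r)$ onto the $x$-variables is contained in the projection of $\mathcal{F}^{cap}(B)$ onto the $x$-variables.
   Context: A binary decision diagram (BDD) $B=(N,A)$ is a directed acyclic multigraph whose node set is partitioned into layers $N_1,\dots,N_{n+1}$ with $N_1=\{r\}$, $N_{n+1}=\{t\}$; every arc $a$ goes from $s(a)\in N_i$ to $t(a)\in N_{i+1}$ for some $i\in I=\{1,\dots,n\}$ and has label $v_a\in\{0,1\}$, each node having at most one outgoing arc of each label; layer $i$ corresponds to variable $x_i$. $X_B\subseteq\{0,1\}^n$ is the set of label vectors of $r$–$t$ paths. A BDD is reduced if it has the minimum number of nodes among all BDDs (with this layer/variable ordering) representing the same set; it is unique and obtained from any BDD for the set by merging equivalent nodes. $\mathcal{F}^{cap}(B)$ is the set of $(x,y)\in[0,1]^n\times\mathbb{R}^{|A|}_{\ge0}$ satisfying flow conservation $\sum_{a\in\delta^+(u)}y_a=\sum_{a\in\delta^-(u)}y_a$ for $u\in N\setminus\{r,t\}$, $\sum_{a\in\delta^+(r)}y_a=\sum_{a\in\delta^-(t)}y_a=1$, $y_a\le x_i$ for every arc $a$ with $s(a)\in N_i$, $v_a=1$, and $y_a\le1-x_i$ for every arc $a$ with $s(a)\in N_i$, $v_a=0$. *)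

(* Defs.v *)
From HB Require Import structures.
From mathcomp Require Import all_boot all_order all_algebra.
Set Implicit Arguments. Unset Strict Implicit. Unset Printing Implicit Defensive.
Import Order.TTheory GRing.Theory Num.Theory.
Local Open Scope ring_scope.

(* Layers are 0-indexed: layer 0 = {root},
   layer n = {term}; an arc leaving layer i (i < n) corresponds to variable x_i
   (x : 'I_n -> _). Arcs form a finite type (multigraph). *)
Record bdd (n : nat) := BDD {
  node : finType;
  arc : finType;
  layer : node -> nat;
  src : arc -> node;
  tgt : arc -> node;
  lab : arc -> bool;
  root : node;
  term : node }.
Arguments node {n} b.
Arguments arc {n} b.
Arguments layer {n} b _.
Arguments src {n} b _.
Arguments tgt {n} b _.
Arguments lab {n} b _.
Arguments root {n} b.
Arguments term {n} b.

Definition bdd_wf n (B : bdd n) : Prop :=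
  [/\ layer B (root B) = 0%N /\ (forall u, layer B u = 0%N -> u = root B),
      layer B (term B) = n /\ (forall u, layer B u = n -> u = term B),
      (forall u, (layer B u <= n)%N),
      (forall a, (layer B (src B a) < n)%N /\
                 layer B (tgt B a) = (layer B (src B a)).+1)
    & (forall a b, src B a = src B b -> lab B a = lab B b -> a = b)].

Definition bdd_set n (B : bdd n) (v : 'I_n -> bool) : Prop :=
  exists p : 'I_n -> arc B,
    (forall i, layer B (src B (p i)) = i /\ lab B (p i) = v i) /\
    (forall i j : 'I_n, nat_of_ord j = (nat_of_ord i).+1 -> tgt B (p i) = src B (p j)).

Definition bdd_reduced n (B : bdd n) : Prop :=
  forall B' : bdd n, bdd_wf B' ->
    (forall v, bdd_set B' v <-> bdd_set B v) -> (#|node B| <= #|node B'|)%N.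

Definition Fcap (R : realFieldType) n (B : bdd n) (x : 'I_n -> R) (y : arc B -> R) : Prop :=
  [/\ (forall i, 0 <= x i <= 1),
      (forall a, 0 <= y a),
      (forall u, u != root B -> u != term B ->
         \sum_(a | src B a == u) y a = \sum_(a | tgt B a == u) y a),
      \sum_(a | src B a == root B) y a = 1 /\ \sum_(a | tgt B a == term B) y a = 1
    & (forall (a : arc B) (i : 'I_n), layer B (src B a) = i ->
         if lab B a then y a <= x i else y a <= 1 - x i)].

Arguments Fcap {R n} B x y.

Definition projx (R : realFieldType) n (B : bdd n) (x : 'I_n -> R) : Prop :=
  exists y : arc B -> R, Fcap B x y.
Arguments projx {R n} B x.
Arguments bdd_set {n} B v.
Arguments bdd_wf {n} B.
Arguments bdd_reduced {n} B.

(* Main.v *)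
Require Import Defs.
From HB Require Import structures.
From mathcomp Require Import all_boot all_order all_algebra.
From mathcomp Require Import zify ring lra.
Import Defs.
Set Implicit Arguments. Unset Strict Implicit. Unset Printing Implicit Defensive.
Import Order.TTheory GRing.Theory Num.Theory.

Section Paths.
Variable n : nat.

Definition fp (C : bdd n) (p : 'I_n -> arc C) : Prop :=
  (forall i, layer C (src C (p i)) = i) /\
  (forall i j : 'I_n, nat_of_ord j = (nat_of_ord i).+1 -> tgt C (p i) = src C (p j)).
Arguments fp : clear implicits.

Lemma bdd_setP (C : bdd n) v :
  bdd_set C v <-> exists p, fp C p /\ forall i, lab C (p i) = v i.
Proof.
split.
  move=> [p [H1 H2]]; exists p; split; first split.
  - by move=> i; case: (H1 i).
  - exact: H2.
  by move=> i; case: (H1 i).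
move=> [p [[H1 H2] H3]]; exists p; split => //.
Qed.

Definition splice (C : bdd n) (p p2 : 'I_n -> arc C) (i : nat) : 'I_n -> arc C :=
  fun j => if (j < i)%N then p j else p2 j.

Lemma splice_fp (C : bdd n) (p p2 : 'I_n -> arc C) (i : nat) :
  (forall j, layer C (src C (p j)) = j) -> (forall j, layer C (src C (p2 j)) = j) ->
  (forall j k : 'I_n, nat_of_ord k = (nat_of_ord j).+1 -> (k < i)%N ->
     tgt C (p j) = src C (p k)) ->
  (forall j k : 'I_n, nat_of_ord k = (nat_of_ord j).+1 -> (i <= j)%N ->
     tgt C (p2 j) = src C (p2 k)) ->
  (forall j k : 'I_n, nat_of_ord k = (nat_of_ord j).+1 -> nat_of_ord k = i ->
     tgt C (p j) = src C (p2 k)) ->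
  fp C (splice p p2 i).
Proof.
move=> l1 l2 c1 c2 cj; split=> [j|j k hk]; rewrite /splice.
  by case: ifP.
case: (ltnP k i) => hki.
  have -> : (j < i)%N by lia.
  by apply: c1.
case: (ltnP j i) => hji.
  have : nat_of_ord k = i by lia.
  by apply: cj.
by apply: c2.
Qed.

Lemma splice_fp2 (C : bdd n) p p2 (i : 'I_n) :
  fp C p -> fp C p2 -> src C (p i) = src C (p2 i) -> fp C (splice p p2 i).
Proof.
move=> [l1 c1] [l2 c2] e; apply: splice_fp => //.
- by move=> j k hk _; apply: c1.
- by move=> j k hk _; apply: c2.
move=> j k hk hki; have -> : k = i by apply: val_inj.
by rewrite -e; apply: c1; rewrite -hki.
Qed.

Lemma splice_lab (C : bdd n) p p2 (i : nat) j :
  lab C (splice p p2 i j) = if (j < i)%N then lab C (p j) else lab C (p2 j).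
Proof. by rewrite /splice; case: ifP. Qed.

Lemma wf_root (C : bdd n) : bdd_wf C -> forall u, (layer C u == 0%N) = (u == root C).
Proof.
move=> [[r1 r2] _ _ _ _] u; apply/idP/idP.
  by move/eqP=> /r2 ->.
by move/eqP->; rewrite r1.
Qed.

Lemma wf_term (C : bdd n) : bdd_wf C -> forall u, (layer C u == n) = (u == term C).
Proof.
move=> [_ [t1 t2] _ _ _] u; apply/idP/idP.
  by move/eqP=> /t2 ->.
by move/eqP->; rewrite t1.
Qed.

Lemma det (C : bdd n) : bdd_wf C -> forall p p2, fp C p -> fp C p2 ->
  forall m (j : 'I_n), nat_of_ord j = m ->
  (forall k : 'I_n, (k <= j)%N -> lab C (p k) = lab C (p2 k)) -> p j = p2 j.
Proof.
move=> wf p p2 [l1 c1] [l2 c2]; have wf' := wf.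
case: wf' => [[r1 r2] _ _ _ d].
elim=> [|m IH] j hj hl.
  apply: d; last by apply: hl.
  by rewrite (r2 _ (etrans (l1 j) hj)) (r2 _ (etrans (l2 j) hj)).
have hm : (m < n)%N by have := ltn_ord j; lia.
set j' := Ordinal hm.
have e : p j' = p2 j'.
  by apply: IH => // k hk; apply: hl; rewrite /= in hk; lia.
apply: d; last by apply: hl.
by rewrite -(c1 j') ?hj // -(c2 j') ?hj // e.
Qed.

Lemma det_src (C : bdd n) : bdd_wf C -> forall p p2, fp C p -> fp C p2 ->
  forall i : 'I_n, (forall k : 'I_n, (k < i)%N -> lab C (p k) = lab C (p2 k)) ->
  src C (p i) = src C (p2 i).
Proof.
move=> wf p p2 h1 h2 i hl; have wf' := wf.
case: wf' => [[r1 r2] _ _ _ d].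
case: h1 => [l1 c1]; case: h2 => [l2 c2].
case hi: (nat_of_ord i) => [|m].
  by rewrite (r2 _ (etrans (l1 i) hi)) (r2 _ (etrans (l2 i) hi)).
have hm : (m < n)%N by have := ltn_ord i; lia.
set j' := Ordinal hm.
have e : p j' = p2 j'.
  apply: (det wf (conj l1 c1) (conj l2 c2) (erefl _)) => k hk.
  by apply: hl; rewrite /= in hk; lia.
by rewrite -(c1 j') ?hi // -(c2 j') ?hi // e.
Qed.

End Paths.
Arguments fp {n} C p.


Section Merge.
Variable n : nat.
Variable C : bdd n.
Hypothesis wf : bdd_wf C.
Variables (s1 s2 : node C) (i : 'I_n).
Hypothesis s12 : s1 != s2.
Hypothesis ls1 : layer C s1 = i.
Hypothesis ls2 : layer C s2 = i.
Hypothesis T21 : forall P, fp C P -> src C (P i) = s2 ->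
  exists P', fp C P' /\ src C (P' i) = s1 /\
    forall j : 'I_n, (i <= j)%N -> lab C (P' j) = lab C (P j).
Hypothesis T12 : forall P, fp C P -> src C (P i) = s1 ->
  exists P', fp C P' /\ src C (P' i) = s2 /\
    forall j : 'I_n, (i <= j)%N -> lab C (P' j) = lab C (P j).
Hypothesis ex1 : exists P, fp C P /\ src C (P i) = s1.
Hypothesis ex2 : exists P, fp C P /\ src C (P i) = s2.

Definition mnode := {u : node C | u != s2}.
Definition marc := {a : arc C | src C a != s2}.
Definition s1' : mnode := exist _ s1 s12.
Definition g (u : node C) : mnode := insubd s1' u.

Lemma val_g u : val (g u) = if u != s2 then u else s1.
Proof. by rewrite /g val_insubd. Qed.

Lemma g_ne u : u != s2 -> val (g u) = u.
Proof. by rewrite val_g => ->. Qed.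

Lemma i_pos : (0 < i)%N.
Proof.
case: wf => [[r1 r2] _ _ _ _].
rewrite lt0n; apply/negP => /eqP h.
have e1 := r2 _ (etrans ls1 h); have e2 := r2 _ (etrans ls2 h).
by move/eqP: s12; rewrite e1 e2.
Qed.

Lemma root_ne : root C != s2.
Proof.
case: wf => [[r1 r2] _ _ _ _]; apply/eqP => e.
by have := i_pos; rewrite -ls2 -e r1.
Qed.

Lemma term_ne : term C != s2.
Proof.
case: wf => [_ [t1 t2] _ _ _]; apply/eqP => e.
by have := ltn_ord i; rewrite -ls2 -e t1 ltnn.
Qed.

Definition Cm : bdd n := @BDD n mnode marc
  (fun u => layer C (val u)) (fun a => g (src C (val a))) (fun a => g (tgt C (val a)))
  (fun a => lab C (val a)) (g (root C)) (g (term C)).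

Lemma Cm_wf : bdd_wf Cm.
Proof.
have wf' := wf; case: wf' => [[r1 r2] [t1 t2] lb la d].
split => /=.
- rewrite g_ne ?root_ne //; split => // u hu.
  apply: val_inj; rewrite g_ne ?root_ne //; exact: r2.
- rewrite g_ne ?term_ne //; split => // u hu.
  apply: val_inj; rewrite g_ne ?term_ne //; exact: t2.
- by move=> u; apply: lb.
- move=> a; rewrite !val_g (valP a); case: (la (val a)) => h1 h2; split => //.
  by case: ifP => // /negbFE /eqP e; have := f_equal (layer C) e; rewrite h2 ls2 ls1 => <-.
- move=> a b; rewrite /= => e l; apply: val_inj; apply: d => //.
  by rewrite -(g_ne (valP a)) -(g_ne (valP b)) e.
Qed.

Lemma Cm_card : (#|node Cm| < #|node C|)%N.
Proof.
rewrite /= card_sig.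
have -> : #|[pred x | x != s2]| = #|predC1 s2| by apply: eq_card.
rewrite cardC1; have : (0 < #|node C|)%N by apply/card_gt0P; exists s2.
by case: #|_|.
Qed.

Lemma g_s1 : g s1 = s1'.
Proof. by apply: val_inj; rewrite g_ne. Qed.
Lemma g_s2 : g s2 = s1'.
Proof. by apply: val_inj; rewrite val_g eqxx. Qed.

Lemma lay_ne (Q : 'I_n -> arc C) j : (forall j, layer C (src C (Q j)) = j) ->
  nat_of_ord j != i -> src C (Q j) != s2.
Proof.
move=> l hj; apply/eqP => e; move: (l j); rewrite e ls2 => h.
by move: hj; rewrite -h eqxx.
Qed.

Lemma lift_fp (Q : 'I_n -> arc C) (H : forall j, src C (Q j) != s2) :
  (forall j, layer C (src C (Q j)) = j) ->
  (forall j k : 'I_n, nat_of_ord k = (nat_of_ord j).+1 -> g (tgt C (Q j)) = g (src C (Q k))) ->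
  fp Cm (fun j => (exist _ (Q j) (H j) : marc)).
Proof.
move=> l c; split => [j|j k hk] /=.
  by rewrite g_ne.
exact: c.
Qed.

Lemma Cm_set2 v : bdd_set C v -> bdd_set Cm v.
Proof.
move/bdd_setP => [P [[lP cP] hv]].
case: (eqVneq (src C (P i)) s2) => hs.
  have [P' [[lP' cP'] [hP' hl']]] := T21 (conj lP cP) hs.
  set Q := splice P P' i.
  have lQ : forall j, layer C (src C (Q j)) = j.
    by move=> j; rewrite /Q /splice; case: ifP.
  have H : forall j, src C (Q j) != s2.
    move=> j; case: (eqVneq (nat_of_ord j) i) => hj; last exact: lay_ne.
    have -> : j = i by apply: val_inj.
    by rewrite /Q /splice ltnn hP'.
  apply/bdd_setP; exists (fun j => (exist _ (Q j) (H j) : marc)); split.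
    apply: lift_fp => // j k hk.
    rewrite /Q /splice; case: (ltnP k i) => hki.
      by rewrite (_ : (j < i)%N) ?(cP j k) //; lia.
    case: (ltnP j i) => hji.
      have ek : k = i by apply: val_inj => /=; lia.
      by rewrite (cP j k) // ek hs hP' g_s1 g_s2.
    by rewrite (cP' j k).
  move=> j /=; rewrite /Q /splice; case: ifP => // /negbT; rewrite -leqNgt => hj.
  by rewrite hl'.
have H : forall j, src C (P j) != s2.
  move=> j; case: (eqVneq (nat_of_ord j) i) => hj; last exact: lay_ne.
  by have -> : j = i by apply: val_inj.
apply/bdd_setP; exists (fun j => (exist _ (P j) (H j) : marc)); split => //.
by apply: lift_fp => // j k hk; rewrite (cP j k).
Qed.

Lemma Cm_set1 v : bdd_set Cm v -> bdd_set C v.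
Proof.
have wf' := wf; case: wf' => [_ _ _ la _].
move/bdd_setP => [Q [[lQ cQ] hv]].
set R := fun j => val (Q j).
have lR : forall j, layer C (src C (R j)) = j.
  by move=> j; have := lQ j; rewrite /= g_ne // (valP (Q j)).
have cR : forall j k : 'I_n, nat_of_ord k = (nat_of_ord j).+1 ->
    (if tgt C (R j) != s2 then tgt C (R j) else s1) = src C (R k).
  move=> j k hk; have := f_equal val (cQ j k hk); rewrite /= !val_g.
  by rewrite (valP (Q k)).
have tR : forall j : 'I_n, tgt C (R j) = s2 -> (nat_of_ord j).+1 = i.
  move=> j e; have := (la (R j)).2; rewrite e ls2 lR => ->.
  by [].
have cR' : forall j k : 'I_n, nat_of_ord k = (nat_of_ord j).+1 -> nat_of_ord k != i ->
    tgt C (R j) = src C (R k).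
  move=> j k hk hki; have := cR j k hk; case: ifP => // /negbFE /eqP e.
  by move: hki; rewrite hk tR // eqxx.
have hv' : forall j, lab C (R j) = v j by move=> j; rewrite -hv.
have ip := i_pos.
have hm : (i.-1 < n)%N by have := ltn_ord i; lia.
set im := Ordinal hm.
case: (eqVneq (tgt C (R im)) s2) => him; last first.
  apply/bdd_setP; exists R; split => //; split => // j k hk.
  case: (eqVneq (nat_of_ord k) i) => hki; last exact: cR'.
  have ej : j = im by apply: val_inj => /=; lia.
  by have := cR j k hk; rewrite ej him.
have [p2 [fp2 hp2]] := ex2.
have [p [fp1 hp1]] := ex1.
have f1 : fp C (splice R p2 i).
  apply: splice_fp => //; first exact: fp2.1.
  - move=> j k hk hki; apply: cR' => //; apply/eqP; lia.
  - by move=> j k hk _; apply: fp2.2.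
  move=> j k hk hki; have ej : j = im by apply: val_inj => /=; lia.
  have ek : k = i by apply: val_inj.
  by rewrite ej ek him hp2.
have sRi : src C (R i) = s1.
  have := cR im i; rewrite him eqxx /= => <- //=; lia.
have f2 : fp C (splice p R i).
  apply: splice_fp => //; first exact: fp1.1.
  - by move=> j k hk _; apply: fp1.2.
  - move=> j k hk hki; apply: cR' => //; apply/eqP; lia.
  move=> j k hk hki; have ek : k = i by apply: val_inj.
  by rewrite (fp1.2 j k hk) ek hp1 sRi.
have hs2 : src C (splice p R i i) = s1 by rewrite /splice ltnn.
have [P' [fP' [hP' hl']]] := T12 f2 hs2.
apply/bdd_setP; exists (splice (splice R p2 i) P' i); split.
  apply: splice_fp2 => //.
  rewrite /splice.
  case: ifP => [h|_]; first by move: h; rewrite ltnn.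
  by rewrite hp2 hP'.
move=> j; rewrite !splice_lab; case: (ltnP j i) => hj; first by rewrite hv'.
by rewrite hl' // splice_lab ltnNge hj /= hv'.
Qed.

End Merge.

Lemma merge_bdd n (C : bdd n) (wf : bdd_wf C) (s1 s2 : node C) (i : 'I_n) :
  s1 != s2 -> layer C s1 = i -> layer C s2 = i ->
  (forall P, fp C P -> src C (P i) = s2 ->
    exists P', fp C P' /\ src C (P' i) = s1 /\
    forall j : 'I_n, (i <= j)%N -> lab C (P' j) = lab C (P j)) ->
  (forall P, fp C P -> src C (P i) = s1 ->
    exists P', fp C P' /\ src C (P' i) = s2 /\
    forall j : 'I_n, (i <= j)%N -> lab C (P' j) = lab C (P j)) ->
  (exists P, fp C P /\ src C (P i) = s1) ->
  (exists P, fp C P /\ src C (P i) = s2) ->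
  exists C' : bdd n, bdd_wf C' /\ (forall v, bdd_set C' v <-> bdd_set C v) /\
    (#|node C'| < #|node C|)%N.
Proof.
move=> s12 l1 l2 T21 T12 e1 e2.
exists (Cm s12); split; first exact: (Cm_wf wf s12 l1 l2).
split; last exact: Cm_card.
move=> v; split; first exact: (Cm_set1 wf l1 l2 T12 e1 e2).
exact: (Cm_set2 s12 l1 l2 T21).
Qed.


Section Canon.
Variables (n : nat) (B Br : bdd n).
Hypotheses (wfB : bdd_wf B) (wfR : bdd_wf Br) (red : bdd_reduced Br)
  (eqs : forall v, bdd_set Br v <-> bdd_set B v).

Lemma transfer p q p2 q2 (i : 'I_n) :
  fp Br p -> fp B q -> (forall j, lab Br (p j) = lab B (q j)) ->
  fp Br p2 -> fp B q2 -> (forall j, lab Br (p2 j) = lab B (q2 j)) ->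
  src B (q i) = src B (q2 i) ->
  forall P, fp Br P -> src Br (P i) = src Br (p i) ->
  exists P', fp Br P' /\ src Br (P' i) = src Br (p2 i) /\
    forall j : 'I_n, (i <= j)%N -> lab Br (P' j) = lab Br (P j).
Proof.
move=> fp1 fq1 l1 fp2 fq2 l2 eq P fP eP.
have f1 : fp Br (splice p P i) by apply: splice_fp2.
have [q' [fq' lq']] : exists q', fp B q' /\ forall j, lab B (q' j) = lab Br (splice p P i j).
  by apply/bdd_setP; apply/eqs/bdd_setP; exists (splice p P i).
have e' : src B (q' i) = src B (q i).
  apply: (det_src wfB fq' fq1) => k hk; by rewrite lq' splice_lab hk l1.
have f2 : fp B (splice q2 q' i) by apply: splice_fp2; rewrite // e' eq.
have [P' [fP' lP']] : exists P', fp Br P' /\ forall j, lab Br (P' j) = lab B (splice q2 q' i j).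
  by apply/bdd_setP; apply/eqs/bdd_setP; exists (splice q2 q' i).
exists P'; split => //; split.
  apply: (det_src wfR fP' fp2) => k hk; by rewrite lP' splice_lab hk l2.
move=> j hj; rewrite lP' splice_lab ltnNge hj /= lq' splice_lab ltnNge hj.
by [].
Qed.

Lemma canon p q p2 q2 (i : 'I_n) :
  fp Br p -> fp B q -> (forall j, lab Br (p j) = lab B (q j)) ->
  fp Br p2 -> fp B q2 -> (forall j, lab Br (p2 j) = lab B (q2 j)) ->
  src B (q i) = src B (q2 i) -> src Br (p i) = src Br (p2 i).
Proof.
move=> fp1 fq1 l1 fp2 fq2 l2 eq.
case: (eqVneq (src Br (p i)) (src Br (p2 i))) => // ne.
have [C' [wf' [se lt]]] := merge_bdd wfR ne (fp1.1 i) (fp2.1 i)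
  (transfer fp2 fq2 l2 fp1 fq1 l1 (esym eq))
  (transfer fp1 fq1 l1 fp2 fq2 l2 eq)
  (ex_intro _ p (conj fp1 erefl)) (ex_intro _ p2 (conj fp2 erefl)).
have := red wf' se.
by rewrite leqNgt lt.
Qed.

Definition Rel (a : arc B) (a' : arc Br) : Prop :=
  exists p q (i : 'I_n), [/\ fp Br p, fp B q, (forall j, lab Br (p j) = lab B (q j)),
     q i = a & p i = a'].

Lemma Rel_lab a a' : Rel a a' -> lab B a = lab Br a' /\ layer B (src B a) = layer Br (src Br a').
Proof.
move=> [p [q [i [fp1 fq1 l1 <- <-]]]]; split; first by rewrite l1.
by rewrite fp1.1 fq1.1.
Qed.

Lemma Rel_fun a a' a'' : Rel a a' -> Rel a a'' -> a' = a''.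
Proof.
move=> [p [q [i [fp1 fq1 l1 e1 <-]]]] [p2 [q2 [i2 [fp2 fq2 l2 e2 <-]]]].
have ei : i2 = i by apply: val_inj; rewrite /= -(fq1.1 i) -(fq2.1 i2) e1 e2.
subst i2.
have es : src B (q i) = src B (q2 i) by rewrite e1 e2.
have s := canon fp1 fq1 l1 fp2 fq2 l2 es.
case: wfR => [_ _ _ _ d]; apply: d => //.
by rewrite l1 l2 e1 e2.
Qed.

End Canon.


Section Chi.
Local Open Scope ring_scope.
Variables (R : realFieldType) (n : nat) (C : bdd n).
Hypothesis wf : bdd_wf C.

Definition outf (y : arc C -> R) u := \sum_(a | src C a == u) y a.
Definition inf (y : arc C -> R) u := \sum_(a | tgt C a == u) y a.
Definition chi (P : 'I_n -> arc C) (a : arc C) : R := \sum_(i : 'I_n) ((P i == a)%:R : R).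

Lemma inner_f (f : arc C -> node C) (P : 'I_n -> arc C) i u :
  \sum_(a | f a == u) ((P i == a)%:R : R) = (f (P i) == u)%:R.
Proof.
case: (eqVneq (f (P i)) u) => h.
  rewrite (bigD1 (P i)) ?h //= eqxx big1 ?addr0 // => a /andP [_ ha].
  by rewrite eq_sym (negbTE ha).
rewrite big1 // => a /eqP ha; case: (eqVneq (P i) a) => // e.
by move: h; rewrite e ha eqxx.
Qed.

Lemma outf_chi P u : outf (chi P) u = \sum_(i : 'I_n) ((src C (P i) == u)%:R : R).
Proof.
rewrite /outf /chi exchange_big /=; apply: eq_bigr => i _.
exact: (inner_f (src C)).
Qed.

Lemma inf_chi P u : inf (chi P) u = \sum_(i : 'I_n) ((tgt C (P i) == u)%:R : R).
Proof.
rewrite /inf /chi exchange_big /=; apply: eq_bigr => i _.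
exact: (inner_f (tgt C)).
Qed.

Lemma sum_single (F : 'I_n -> bool) (i0 : 'I_n) :
  (forall i, F i -> i = i0) -> \sum_(i : 'I_n) ((F i)%:R : R) = (F i0)%:R.
Proof.
move=> h; rewrite (bigD1 i0) //= big1 ?addr0 // => i hi.
case: (boolP (F i)) => // /h e; by move: hi; rewrite e eqxx.
Qed.

Lemma chi_on P (hP : fp C P) i : chi P (P i) = 1.
Proof.
rewrite /chi (sum_single (F := fun j => P j == P i) (i0 := i)) ?eqxx //.
move=> j /eqP e; apply: val_inj; by rewrite /= -(hP.1 i) -(hP.1 j) e.
Qed.

Lemma chi_off P a : (forall i, P i != a) -> chi P a = 0.
Proof. by move=> h; rewrite /chi big1 // => i _; rewrite (negbTE (h i)). Qed.

Lemma chi_ge0 P a : 0 <= chi P a.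
Proof. by apply: sumr_ge0 => i _; apply: ler0n. Qed.

Lemma tgt_layer (a : arc C) : layer C (tgt C a) = (layer C (src C a)).+1.
Proof. by case: wf => [_ _ _ la _]; case: (la a). Qed.

Lemma chi_cons P (hP : fp C P) u : u != root C -> u != term C ->
  outf (chi P) u = inf (chi P) u.
Proof.
move=> hr ht; have wf' := wf; case: wf' => [[r1 r2] [t1 t2] lb _ _].
rewrite outf_chi inf_chi.
have k0 : layer C u != 0%N by apply: contra hr => /eqP /r2 ->.
have kn : layer C u != n by apply: contra ht => /eqP /t2 ->.
have lu := lb u.
have h1 : (layer C u < n)%N by lia.
have h2 : ((layer C u).-1 < n)%N by lia.
set ik := Ordinal h1; set jk := Ordinal h2.
rewrite (sum_single (i0 := ik)); last first.
  by move=> i /eqP e; apply: val_inj; rewrite /= -e hP.1.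
rewrite (sum_single (i0 := jk)); last first.
  move=> i /eqP e; apply: val_inj; rewrite /= -e tgt_layer hP.1; lia.
by rewrite (hP.2 jk ik) //=; lia.
Qed.

Lemma chi_root P (hP : fp C P) (i0 : 'I_n) : outf (chi P) (root C) = 1.
Proof.
have wf' := wf; case: wf' => [[r1 r2] [t1 t2] lb _ _].
have h0 : (0 < n)%N by have := ltn_ord i0; lia.
rewrite outf_chi (sum_single (i0 := Ordinal h0)).
  by rewrite (r2 _ (hP.1 (Ordinal h0))) eqxx.
by move=> i /eqP e; apply: val_inj; rewrite /= -(hP.1 i) e r1.
Qed.

Lemma chi_term P (hP : fp C P) (i0 : 'I_n) : inf (chi P) (term C) = 1.
Proof.
have wf' := wf; case: wf' => [[r1 r2] [t1 t2] lb _ _].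
have h0 : (n.-1 < n)%N by have := ltn_ord i0; lia.
rewrite inf_chi (sum_single (i0 := Ordinal h0)).
  rewrite (t2 (tgt C (P (Ordinal h0)))) ?eqxx // tgt_layer hP.1 /=; lia.
move=> i /eqP e; apply: val_inj; have := tgt_layer (P i).
rewrite e t1 hP.1 /= => h; lia.
Qed.

End Chi.
Arguments chi {R n C} P a.
Arguments chi_on {R n C P} hP i.
Arguments chi_off {R n C P a} _.
Arguments chi_ge0 {R n C P a}.
Arguments chi_cons {R n C} wf {P} hP {u} _ _.
Arguments chi_root {R n C} wf {P} hP i0.
Arguments chi_term {R n C} wf {P} hP i0.


Section PosPath.
Local Open Scope ring_scope.
Variables (R : realFieldType) (n : nat) (C : bdd n).
Hypothesis wf : bdd_wf C.
Variable yr : arc C -> R.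
Hypothesis yr0 : forall a, 0 <= yr a.
Hypothesis cons : forall u, u != root C -> u != term C -> outf yr u = inf yr u.

Lemma pick_pos (f : arc C -> node C) u :
  0 < \sum_(a | f a == u) yr a ->
  exists b, [pick b | (f b == u) && (0 < yr b)] = Some b.
Proof.
case: pickP => [b _|h]; first by exists b.
rewrite big1 ?ltxx // => b hb.
have := h b; rewrite hb /= => /negbT; rewrite -leNgt => h2.
by apply/eqP; rewrite eq_le h2 yr0.
Qed.

Lemma sum_ge (f : arc C -> node C) a : yr a <= \sum_(b | f b == f a) yr b.
Proof.
rewrite (bigD1 a) //= lerDl; apply: sumr_ge0 => b _; exact: yr0.
Qed.

Definition next a := if [pick b | (src C b == tgt C a) && (0 < yr b)] is Some b then b else a.
Definition prev a := if [pick b | (tgt C b == src C a) && (0 < yr b)] is Some b then b else a.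

Lemma next_ok a : 0 < yr a -> ((layer C (src C a)).+1 < n)%N ->
  0 < yr (next a) /\ src C (next a) = tgt C a.
Proof.
move=> ha hl; have wf' := wf; case: wf' => [[r1 r2] [t1 t2] lb _ _].
set u := tgt C a.
have lu : layer C u = (layer C (src C a)).+1 by apply: tgt_layer.
have hr : u != root C by apply/eqP => e; move: lu; rewrite e r1.
have ht : u != term C by apply/eqP => e; move: lu hl; rewrite e t1 => <-; rewrite ltnn.
have : 0 < outf yr u by rewrite cons // /inf; apply: lt_le_trans ha (sum_ge (tgt C) a).
rewrite /outf => /pick_pos [b hb]; rewrite /next hb.
move: hb; case: pickP => // b' /andP [/eqP e1 e2] [<-]; by rewrite e1 e2.
Qed.

Lemma prev_ok a : 0 < yr a -> (0 < layer C (src C a))%N ->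
  0 < yr (prev a) /\ tgt C (prev a) = src C a.
Proof.
move=> ha hl; have wf' := wf; case: wf' => [[r1 r2] [t1 t2] lb la _].
set u := src C a.
have hr : u != root C by apply/eqP => e; move: hl; rewrite /u in e; rewrite e r1.
have ht : u != term C by apply/eqP => e; have := (la a).1; rewrite -/u e t1 ltnn.
have : 0 < inf yr u by rewrite -cons // /outf; apply: lt_le_trans ha (sum_ge (src C) a).
rewrite /inf => /pick_pos [b hb]; rewrite /prev hb.
move: hb; case: pickP => // b' /andP [/eqP e1 e2] [<-]; by rewrite e1 e2.
Qed.

Lemma pospath a0 : 0 < yr a0 -> exists P, fp C P /\ forall i, 0 < yr (P i).
Proof.
move=> h0; have wf' := wf; case: wf' => [[r1 r2] [t1 t2] lb la _].
set k0 := layer C (src C a0).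
have hk0 : (k0 < n)%N by apply: (la a0).1.
have fw : forall m, (k0 + m < n)%N ->
    0 < yr (iter m next a0) /\ layer C (src C (iter m next a0)) = (k0 + m)%N.
  elim=> [|m IH] hm; first by rewrite addn0.
  have hm' : (k0 + m < n)%N by lia.
  have [h1 h2] := IH hm'.
  have hl : ((layer C (src C (iter m next a0))).+1 < n)%N by rewrite h2; lia.
  have [h3 h4] := next_ok h1 hl.
  rewrite /= h3 h4 (tgt_layer wf) h2 addnS. by [].
have fwc : forall m, (k0 + m.+1 < n)%N ->
    tgt C (iter m next a0) = src C (iter m.+1 next a0).
  move=> m hm; have hm' : (k0 + m < n)%N by lia.
  have [h1 h2] := fw m hm'.
  have hl : ((layer C (src C (iter m next a0))).+1 < n)%N by rewrite h2; lia.
  by have [h3 h4] := next_ok h1 hl; rewrite /= h4.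
have bw : forall m, (m <= k0)%N ->
    0 < yr (iter m prev a0) /\ layer C (src C (iter m prev a0)) = (k0 - m)%N.
  elim=> [|m IH] hm; first by rewrite subn0.
  have hm' : (m <= k0)%N by lia.
  have [h1 h2] := IH hm'.
  have hl : (0 < layer C (src C (iter m prev a0)))%N by rewrite h2; lia.
  have [h3 h4] := prev_ok h1 hl.
  split; first by [].
  have := tgt_layer wf (iter m.+1 prev a0); rewrite /= h4 h2 => h5; lia.
have bwc : forall m, (m < k0)%N ->
    tgt C (iter m.+1 prev a0) = src C (iter m prev a0).
  move=> m hm; have hm' : (m <= k0)%N by lia.
  have [h1 h2] := bw m hm'.
  have hl : (0 < layer C (src C (iter m prev a0)))%N by rewrite h2; lia.
  by have [h3 h4] := prev_ok h1 hl.
exists (fun i : 'I_n => if (k0 <= i)%N then iter (i - k0) next a0 else iter (k0 - i) prev a0).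
split; first split.
- move=> i; case: ifP => hi.
    have hh : (k0 + (i - k0) < n)%N by have := ltn_ord i; lia.
    by rewrite (fw _ hh).2; lia.
  have hh : (k0 - i <= k0)%N by lia.
  by rewrite (bw _ hh).2; lia.
- move=> i j hj; case: (leqP k0 i) => hi.
    have hj' : (k0 <= j)%N by lia.
    rewrite hj'; have -> : (j - k0 = (i - k0).+1)%N by lia.
    apply: fwc; have := ltn_ord j; lia.
  case: (leqP k0 j) => hj'.
    have -> : (k0 - i = 1)%N by lia.
    have -> : (j - k0 = 0)%N by lia.
    by have [_ h] := prev_ok h0 (leq_ltn_trans (leq0n i) hi).
  have -> : (k0 - i = (k0 - j).+1)%N by lia.
  apply: bwc; lia.
- move=> i; case: ifP => hi.
    have hh : (k0 + (i - k0) < n)%N by have := ltn_ord i; lia.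
    exact: (fw _ hh).1.
  have hh : (k0 - i <= k0)%N by lia.
  exact: (bw _ hh).1.
Qed.
End PosPath.


Section Decomp.
Local Open Scope ring_scope.
Variables (R : realFieldType) (n : nat) (B Br : bdd n).
Hypotheses (wfB : bdd_wf B) (wfR : bdd_wf Br) (red : bdd_reduced Br)
  (eqs : forall v, bdd_set Br v <-> bdd_set B v).

Lemma argmin (F : 'I_n -> R) (i0 : 'I_n) : exists im, forall j, F im <= F j.
Proof.
case: (@arg_minP _ R _ i0 predT F isT) => im _ h; exists im => j; exact: h.
Qed.

Lemma sum_lin (T : finType) (p : pred T) (f g : T -> R) (m : R) :
  \sum_(a | p a) (f a + m * g a) = \sum_(a | p a) f a + m * \sum_(a | p a) g a.
Proof. by rewrite big_split /= mulr_sumr. Qed.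

Definition Inv (yr : arc Br -> R) (c : R) (y : arc B -> R) :=
  [/\ (forall a, 0 <= y a),
      (forall u, u != root B -> u != term B -> outf y u = inf y u),
      outf y (root B) = c, inf y (term B) = c &
      forall a, y a = 0 \/ exists a', Rel a a' /\ y a <= yr a'].

Lemma zero_case (yr : arc Br -> R) c :
  (forall a, [pred a | yr a != 0] a = false) -> outf yr (root Br) = c ->
  exists y, Inv yr c y.
Proof.
move=> hz hr.
have ec : c = 0 by rewrite -hr /outf big1 // => a _; move: (hz a) => /= /negbFE /eqP.
exists (fun _ => 0); split => //.
+ by move=> u _ _; rewrite /outf /inf !big1.
+ by rewrite /outf big1.
+ by rewrite /inf big1.
+ by move=> a; left.
Qed.

Lemma decomp N : forall (yr : arc Br -> R) c,
  (#|[pred a | yr a != 0%R]| <= N)%N -> (forall a, 0 <= yr a) ->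
  (forall u, u != root Br -> u != term Br -> outf yr u = inf yr u) ->
  outf yr (root Br) = c -> inf yr (term Br) = c ->
  exists y, Inv yr c y.
Proof.
elim: N => [|N IH] yr c hN y0 cons hr ht;
  (case: (pickP [pred a | yr a != 0]) => [a0 ha0|hz]); try by apply: zero_case.
  have : (0 < #|[pred a | yr a != 0%R]|)%N by apply/card_gt0P; exists a0.
  lia.
have h0 : 0 < yr a0 by rewrite lt0r y0 andbT; exact: ha0.
have [P [fP pos]] := pospath wfR y0 cons h0.
have i00 : 'I_n := Ordinal (proj1 (match wfR with And5 _ _ _ la _ => la a0 end)).
have [im hmin] := argmin (fun i => yr (P i)) i00.
set mu := yr (P im).
have mu0 : 0 < mu by apply: pos.
set yr1 := fun a => yr a + (- mu) * chi P a.
have chiP : forall a : arc Br, (exists i, a = P i /\ (chi P a : R) = 1) \/ (chi P a : R) = 0.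
  move=> a; case: (pickP [pred i | P i == a]) => [i /eqP hi|hz].
    by left; exists i; rewrite -hi chi_on.
  by right; apply: chi_off => i; move: (hz i) => /= ->.
have y10 : forall a, 0 <= yr1 a.
  move=> a; rewrite /yr1; case: (chiP a) => [[i [-> ->]]|->].
    by rewrite mulr1 subr_ge0 hmin.
  by rewrite mulr0 addr0.
have yr1_le : forall a, yr1 a <= yr a.
  by move=> a; rewrite /yr1 mulNr gerBl mulr_ge0 ?chi_ge0 // ltW.
have hN' : (#|[pred a | yr1 a != 0%R]| <= N)%N.
  have sub : {subset [pred a | yr1 a != 0%R] <= [predD1 [pred a | yr a != 0%R] & P im]}.
    move=> a /= h; apply/andP; split.
      apply: contra h => /eqP ->; rewrite /yr1 chi_on // mulr1 -/mu.
      by apply/eqP; ring.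
    apply: contra h => /eqP e; rewrite eq_le y10 andbT.
    by rewrite -e yr1_le.
  have := subset_leq_card (introT subsetP sub).
  have := cardD1 (P im) [pred a | yr a != 0%R].
  rewrite inE /= -/mu (gt_eqF mu0) /= => e.
  move: hN; rewrite e add1n ltnS => h1 h2; exact: leq_trans h2 h1.
have cons1 : forall u, u != root Br -> u != term Br -> outf yr1 u = inf yr1 u.
  move=> u h1 h2; rewrite /outf /inf /yr1 !sum_lin.
  congr (_ + _ * _); [exact: cons | exact: (chi_cons wfR fP h1 h2)].
have hr1 : outf yr1 (root Br) = c - mu.
  have := chi_root wfR fP i00; move: hr; rewrite /outf /yr1 sum_lin => -> ->.
  by rewrite mulr1.
have ht1 : inf yr1 (term Br) = c - mu.
  have := chi_term wfR fP i00; move: ht; rewrite /inf /yr1 sum_lin => -> ->.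
  by rewrite mulr1.
have [y1 [y10' cy1 ry1 ty1 iy1]] := IH yr1 (c - mu) hN' y10 cons1 hr1 ht1.
have [Q [fQ lQ]] : exists Q, fp B Q /\ forall i, lab B (Q i) = lab Br (P i).
  by apply/bdd_setP; apply/eqs/bdd_setP; exists P.
have chiQ : forall a : arc B, (exists i, a = Q i /\ (chi Q a : R) = 1) \/ (chi Q a : R) = 0.
  move=> a; case: (pickP [pred i | Q i == a]) => [i /eqP hi|hz].
    by left; exists i; rewrite -hi chi_on.
  by right; apply: chi_off => i; move: (hz i) => /= ->.
exists (fun a => y1 a + mu * chi Q a); split.
- by move=> a; rewrite addr_ge0 ?mulr_ge0 ?chi_ge0 // ltW.
- move=> u h1 h2; rewrite /outf /inf !sum_lin.
  congr (_ + _ * _); [exact: cy1 | exact: (chi_cons wfB fQ h1 h2)].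
- have := chi_root wfB fQ i00; move: ry1; rewrite /outf sum_lin => -> ->.
  by rewrite mulr1 subrK.
- have := chi_term wfB fQ i00; move: ty1; rewrite /inf sum_lin => -> ->.
  by rewrite mulr1 subrK.
move=> a; case: (chiQ a) => [[i [ea ->]]|->]; last first.
  rewrite mulr0 addr0; case: (iy1 a) => [->|[a' [ra la]]]; first by left.
  by right; exists a'; split => //; apply: le_trans la (yr1_le a').
have rel : Rel a (P i).
  by exists P, Q, i; split => //; move=> j; rewrite lQ.
right; exists (P i); split => //; rewrite mulr1.
case: (iy1 a) => [->|[a' [ra la]]]; first by rewrite add0r hmin.
have e := Rel_fun wfB wfR red eqs ra rel; subst a'.
move: la; rewrite /yr1 chi_on // mulr1 => la.
by rewrite -lerBrDr; apply: le_trans la _; rewrite lerD2l.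
Qed.
End Decomp.


Unset Implicit Arguments.
Theorem theorem4 (R : realFieldType) (n : nat) (B Br : bdd n) :
  bdd_wf B -> bdd_wf Br -> bdd_reduced Br ->
  (forall v, bdd_set Br v <-> bdd_set B v) ->
  forall x : 'I_n -> R, projx Br x -> projx B x.
Proof.
move=> wfB wfR red eqs x [yr [hx hy hc [hr ht] hcap]].
have [y [y0 cy ry ty iy]] := decomp wfB wfR red eqs (leqnn _) hy hc hr ht.
exists y; split => //.
move=> a i hi; case: (iy a) => [->|[a' [ra la]]].
  by case: (lab B a); have /andP [h1 h2] := hx i; rewrite // subr_ge0.
have [el ell] := Rel_lab ra.
have := hcap a' i; rewrite -el -ell hi => /(_ erefl).
by case: (lab B a) => h; apply: Order.POrderTheory.le_trans la h.
Qed.
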